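(* There is an online algorithm for the online covering problem that maintains a nondecreasing $x\in\mathbb{R}^n_{\ge 0}$ satisfying all arrived constraints, whose final objective value satisfies $\langle c,x\rangle\le O(\log n)\cdot\mathsf{OPT}$, and such that the number of arriving constraints on which the algorithm performs an update (i.e., constraints found violated when processed) is at most $\mathrm{poly}(n,\log\mathsf{OPT},\log(1/\alpha_1))$, where $\alpha_1=\min_{j\in[n]}\{c_j/a_{1j}: a_{1j}>0\}$.
   Context: Online covering problem: the LP is $\min \langle c,x\rangle$ over $x\in\mathbb{R}^n_{\ge0}$ subject to $Ax\ge \mathbf{1}$, where $A\in\mathbb{R}^{m\times n}_{\ge 0}$, $c\in\mathbb{R}^n_{>0}$ is known in advance, and $\mathbf{1}$ is the all-ones vector. The rows of $A$ arrive one at a time (the number $m$ may be unknown); in round $i$ the entries $a_{i1},\dots,a_{in}$ are revealed, at least one of them positive, and the algorithm must increase $x$ monotonically (coordinates never decrease) so that $\sum_j a_{ij}x_j\ge 1$. $\mathsf{OPT}$ denotes the optimal value of the LP. *)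

(* Defs.v *)
From mathcomp Require Import all_boot all_order all_algebra.
From mathcomp Require Import all_classical all_reals all_analysis.
Set Implicit Arguments. Unset Strict Implicit. Unset Printing Implicit Defensive.
Import Order.TTheory GRing.Theory Num.Theory.
Local Open Scope ring_scope.
Local Open Scope classical_set_scope.

Definition dotv {R : realType} {n : nat} (a x : 'I_n -> R) : R :=
  \sum_(j < n) a j * x j.

Definition feasible {R : realType} {n : nat} (s : seq ('I_n -> R))
  (x : 'I_n -> R) : Prop :=
  (forall j, 0 <= x j) /\ (forall i, (i < size s)%N -> 1 <= dotv (nth (fun=> 0) s i) x).

Definition OPT {R : realType} {n : nat} (c : 'I_n -> R) (s : seq ('I_n -> R))
  : R := inf [set dotv c x | x in feasible s].

Definition alpha1 {R : realType} {n : nat} (c a1 : 'I_n -> R) : R :=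
  inf [set c j / a1 j | j in [set j | 0 < a1 j]].

(* A (deterministic) online algorithm: knowing n and c in advance, it maps
   the prefix of constraint rows revealed so far to its current solution x.
   Since the output after round t is a function of the first t rows only,
   the algorithm is online; the number m of rows is never given to it. *)
Definition online_alg (R : realType) :=
  forall n : nat, ('I_n -> R) -> seq ('I_n -> R) -> ('I_n -> R).

Definition valid_instance {R : realType} {n : nat} (c : 'I_n -> R)
  (s : seq ('I_n -> R)) : Prop :=
  (forall j, 0 < c j) /\
  (forall i, (i < size s)%N ->
     (forall j, 0 <= nth (fun=> 0) s i j) /\ (exists j, 0 < nth (fun=> 0) s i j)).

Definition num_updates {R : realType} (alg : online_alg R) {n : nat}
  (c : 'I_n -> R) (s : seq ('I_n -> R)) : nat :=
  #|[set t : 'I_(size s) |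
      `[< dotv (nth (fun=> 0) s t) (alg n c (take t s)) < 1 >] ]|.

(* Main.v *)
Require Import Defs.
From mathcomp Require Import all_boot all_order all_algebra.
From mathcomp Require Import all_classical all_reals all_analysis.
From mathcomp Require Import ring lra.
Set Implicit Arguments. Unset Strict Implicit. Unset Printing Implicit Defensive.
Import Order.TTheory GRing.Theory Num.Theory.
Local Open Scope ring_scope.

Definition rsum {R : realType} {n} (c a : 'I_n -> R) : R := \sum_(j < n) a j / c j.
Definition eps {R : realType} {n} (c a : 'I_n -> R) (j : 'I_n) : R :=
  (a j / c j) / (2 * rsum c a).
Definition step {R : realType} {n} (c a x : 'I_n -> R) : 'I_n -> R :=
  fun j => x j * (1 + eps c a j).
Definition okk {R : realType} {n} (c a y : 'I_n -> R) : pred nat :=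
  fun k => 2 <= dotv a (iter k (step c a) y).
Definition nsteps {R : realType} {n} (c a y : 'I_n -> R) : nat :=
  match pselect (exists k, okk c a y k) with
  | left h => ex_minn h | right _ => 0%N end.
Definition flr {R : realType} {n} (c : 'I_n -> R) (O : R) (x : 'I_n -> R) : 'I_n -> R :=
  fun j => Num.max (x j) (O / (n%:R * c j)).
Definition upd {R : realType} {n} (c : 'I_n -> R) (P : seq ('I_n -> R)) (a x : 'I_n -> R) :=
  if 1 <= dotv a x then x else
  let y := flr c (OPT c P) x in iter (nsteps c a y) (step c a) y.
Fixpoint X {R : realType} {n} (c : 'I_n -> R) (s : seq ('I_n -> R)) (t : nat) : 'I_n -> R :=
  match t with
  | 0%N => fun _ => 0
  | t'.+1 => upd c (take t'.+1 s) (nth (fun=> 0) s t') (X c s t')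
  end.
Definition alg (R : realType) : online_alg R := fun n c s => X c s (size s).

Lemma X_take {R : realType} {n} (c : 'I_n -> R) s t t' :
  (t <= t')%N -> X c (take t' s) t = X c s t.
Proof.
elim: t => [//|t IH] Ht /=.
rewrite take_takel // nth_take // IH //; exact: ltnW.
Qed.

Lemma alg_take {R : realType} {n} (c : 'I_n -> R) s t :
  (t <= size s)%N -> @alg R n c (take t s) = X c s t.
Proof. move=> Ht; rewrite /alg size_takel // X_take //. Qed.

Definition nonneg {R : realType} {n} (a : 'I_n -> R) := forall j, 0 <= a j.
Definition vle {R : realType} {n} (x y : 'I_n -> R) := forall j, x j <= y j.

Lemma dotv_mono {R : realType} {n} (a x y : 'I_n -> R) :
  nonneg a -> vle x y -> dotv a x <= dotv a y.
Proof. move=> ha hxy; apply: ler_sum => j _; exact: ler_wpM2l. Qed.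

Lemma dotv_ge0 {R : realType} {n} (a x : 'I_n -> R) :
  nonneg a -> nonneg x -> 0 <= dotv a x.
Proof. move=> ha hx; apply: sumr_ge0 => j _; exact: mulr_ge0. Qed.

Lemma dotv_term {R : realType} {n} (a x : 'I_n -> R) j :
  nonneg a -> nonneg x -> a j * x j <= dotv a x.
Proof.
move=> ha hx; rewrite /dotv (bigD1 j) //= lerDl.
apply: sumr_ge0 => i _; exact: mulr_ge0.
Qed.

Lemma rsum_ge {R : realType} {n} (c a : 'I_n -> R) j :
  (forall j, 0 < c j) -> nonneg a -> a j / c j <= rsum c a.
Proof.
move=> hc ha; rewrite /rsum (bigD1 j) //= lerDl.
apply: sumr_ge0 => i _; apply: divr_ge0 => //; exact: ltW.
Qed.

Lemma eps_ge0 {R : realType} {n} (c a : 'I_n -> R) j :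
  (forall j, 0 < c j) -> nonneg a -> 0 <= eps c a j.
Proof.
move=> hc ha; rewrite /eps; apply: divr_ge0; first by apply: divr_ge0 => //; exact: ltW.
apply: mulr_ge0 => //; apply: sumr_ge0 => i _; apply: divr_ge0 => //; exact: ltW.
Qed.

Lemma eps_le {R : realType} {n} (c a : 'I_n -> R) j :
  (forall j, 0 < c j) -> nonneg a -> eps c a j <= 2^-1.
Proof.
move=> hc ha; rewrite /eps.
have h0 : 0 <= a j / c j by apply: divr_ge0 => //; exact: ltW.
have h1 := rsum_ge j hc ha.
have [->|rn0] := eqVneq (rsum c a) 0.
  by rewrite mulr0 invr0 mulr0.
have rp : 0 < rsum c a by rewrite lt_neqAle eq_sym rn0 (le_trans h0 h1).
rewrite ler_pdivrMr ?mulr_gt0 //.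
by rewrite mulrA mulVf ?mul1r.
Qed.

Lemma step_ge {R : realType} {n} (c a x : 'I_n -> R) :
  (forall j, 0 < c j) -> nonneg a -> nonneg x -> vle x (step c a x).
Proof.
move=> hc ha hx j; rewrite /step -{1}[x j]mulr1.
by apply: ler_wpM2l => //; rewrite lerDl eps_ge0.
Qed.

Lemma iter_ge {R : realType} {n} (c a x : 'I_n -> R) k :
  (forall j, 0 < c j) -> nonneg a -> nonneg x -> vle x (iter k (step c a) x).
Proof.
move=> hc ha hx; elim: k => [|k IH] j /=; first by [].
apply: le_trans (IH j) _; apply: step_ge => // i.
exact: le_trans (hx i) (IH i).
Qed.

Lemma step_cost {R : realType} {n} (c a x : 'I_n -> R) :
  (forall j, 0 < c j) ->
  dotv c (step c a x) = dotv c x + (2 * rsum c a)^-1 * dotv a x.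
Proof.
move=> hc; rewrite /dotv /step mulr_sumr -big_split /=; apply: eq_bigr => j _.
rewrite /eps mulrDr mulr1 mulrDr; congr (_ + _).
have := hc j; rewrite lt0r => /andP[cn0 _].
have [->|rn0] := eqVneq (rsum c a) 0; first by rewrite !mulr0 invr0 !mulr0 mul0r.
by field; rewrite rn0 cn0.
Qed.

Lemma step_dot {R : realType} {n} (c a x : 'I_n -> R) j0 :
  (forall j, 0 < c j) -> nonneg a -> nonneg x ->
  dotv a x + a j0 * x j0 * eps c a j0 <= dotv a (step c a x).
Proof.
move=> hc ha hx.
have -> : dotv a (step c a x) = dotv a x + \sum_(j < n) a j * x j * eps c a j.
  rewrite /dotv /step -big_split /=; apply: eq_bigr => j _; by rewrite !mulrDr !mulr1 mulrA.
rewrite lerD2l (bigD1 j0) //= lerDl; apply: sumr_ge0 => j _.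
apply: mulr_ge0; [exact: mulr_ge0 | exact: eps_ge0].
Qed.

Lemma eps_gt0 {R : realType} {n} (c a : 'I_n -> R) j :
  (forall j, 0 < c j) -> nonneg a -> 0 < a j -> 0 < eps c a j.
Proof.
move=> hc ha haj; rewrite /eps.
have h0 : 0 < a j / c j by apply: divr_gt0.
apply: divr_gt0 => //; apply: mulr_gt0 => //; exact: lt_le_trans h0 (rsum_ge j hc ha).
Qed.

Lemma okk_exists {R : realType} {n} (c a y : 'I_n -> R) j0 :
  (forall j, 0 < c j) -> nonneg a -> nonneg y -> 0 < a j0 -> 0 < y j0 ->
  exists k, okk c a y k.
Proof.
move=> hc ha hy ha0 hy0.
set d := a j0 * y j0 * eps c a j0.
have dp : 0 < d by apply: mulr_gt0; [exact: mulr_gt0 | exact: eps_gt0].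
have H : forall k, k%:R * d <= dotv a (iter k (step c a) y).
  elim=> [|k IH]; first by rewrite mul0r; apply: dotv_ge0.
  have hz : nonneg (iter k (step c a) y).
    by move=> i; exact: le_trans (hy i) (iter_ge k hc ha hy i).
  apply: le_trans (step_dot j0 hc ha hz); rewrite -nat1r mulrDl mul1r addrC.
  apply: lerD => //; rewrite /d; apply: ler_wpM2r; first exact: eps_ge0.
  apply: ler_wpM2l; [exact: ltW | exact: iter_ge].
exists (Num.Def.trunc (2 / d)).+1; rewrite /okk.
apply: le_trans (H _); rewrite -ler_pdivrMr //.
by apply: ltW; apply: truncnS_gt.
Qed.

Lemma nsteps_spec {R : realType} {n} (c a y : 'I_n -> R) j0 :
  (forall j, 0 < c j) -> nonneg a -> nonneg y -> 0 < a j0 -> 0 < y j0 ->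
  2 <= dotv a (iter (nsteps c a y) (step c a) y) /\
  (forall i, (i < nsteps c a y)%N -> dotv a (iter i (step c a) y) < 2).
Proof.
move=> hc ha hy ha0 hy0.
have ex := okk_exists hc ha hy ha0 hy0.
rewrite /nsteps; case: pselect => [h|//].
case: (ex_minnP h) => N hN hmin; split; first exact: hN.
move=> i hi; rewrite ltNge; apply/negP => hk.
by have := hmin i hk; rewrite leqNgt hi.
Qed.

Definition phi {R : realType} (w m x : R) : R := w * Num.max 0 (ln w - ln (Num.max x m)).

Lemma phi_ge0 {R : realType} (w m x : R) : 0 <= w -> 0 <= phi w m x.
Proof. by move=> hw; rewrite /phi mulr_ge0 // le_max lexx. Qed.

Lemma ln_mono {R : realType} (x y : R) : 0 < x -> x <= y -> ln x <= ln y.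
Proof.
move=> hx hxy; rewrite ler_ln // posrE //; exact: lt_le_trans hxy.
Qed.

Lemma phi_mono {R : realType} (w m x x' : R) :
  0 <= w -> 0 < m -> x <= x' -> phi w m x' <= phi w m x.
Proof.
move=> hw hm hx; rewrite /phi; apply: ler_wpM2l => //.
have h1 : 0 < Num.max x m by rewrite lt_max hm orbT.
have h2 : Num.max x m <= Num.max x' m.
  by rewrite ge_max !le_max hx lexx /= orbT.
have := ln_mono h1 h2 => hl.
rewrite ge_max le_max lexx /= le_max; apply/orP; right; lra.
Qed.

Lemma ln1D_ge {R : realType} (e : R) : 0 <= e -> e / (1 + e) <= ln (1 + e).
Proof.
move=> he.
have hp : 0 < 1 + e by lra.
have h1 : -1 < - (e / (1 + e)).
  rewrite ltrNr opprK ltr_pdivrMr // mul1r; lra.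
have := le_ln1Dx h1.
have -> : 1 - e / (1 + e) = (1 + e)^-1.
  by field; rewrite gt_eqF.
rewrite lnV ?posrE //; lra.
Qed.

Lemma phi_step {R : realType} (c a w m x th e : R) :
  0 < c -> 0 <= a -> 0 <= w -> 0 < m -> m <= x -> 0 <= th ->
  c * e = th * a -> 0 <= e -> e <= 2^-1 ->
  (2/3) * th * (a * w - 3/2 * (a * x)) <= c * (phi w m x - phi w m (x * (1 + e))).
Proof.
move=> hc ha hw hm hmx hth hce he0 he1.
have hx : 0 < x by exact: lt_le_trans hmx.
have hx' : x <= x * (1 + e).
  by rewrite -{1}[x]mulr1; apply: ler_wpM2l; [exact: ltW | lra].
have [hg|hb] := leP (x * (1 + e)) w.
- have hmax1 : Num.max x m = x by apply/max_idPl.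
  have hmax2 : Num.max (x * (1 + e)) m = x * (1 + e)
    by apply/max_idPl; exact: le_trans hx'.
  have hxe : 0 < x * (1 + e) by exact: lt_le_trans hx'.
  have hl1 : ln (x * (1 + e)) <= ln w by exact: ln_mono.
  have hl2 : ln x <= ln (x * (1 + e)) by exact: ln_mono.
  have hlm : ln (x * (1 + e)) = ln x + ln (1 + e) by rewrite lnM ?posrE //; lra.
  rewrite /phi hmax1 hmax2.
  rewrite (_ : Num.max 0 (ln w - ln x) = ln w - ln x); last by apply/max_idPr; lra.
  rewrite (_ : Num.max 0 (ln w - ln (x * (1 + e))) = ln w - ln (x * (1 + e)));
    last by apply/max_idPr; lra.
  rewrite hlm.
  have hle := ln1D_ge he0.
  have h23 : (2/3) * e <= e / (1 + e).
    rewrite ler_pdivlMr; last lra.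
    nra.
  have : (2/3) * th * (a * w) <= c * (w * ln (1 + e)).
    have -> : 2/3*th*(a*w) = (c*w)*((2/3)*e).
      by transitivity (2/3*w*(th*a)); [ring | rewrite -hce; ring].
    rewrite mulrA; apply: ler_wpM2l; first by rewrite mulr_ge0 // ltW.
    exact: le_trans h23 hle.
  have : 0 <= th * (a * x) by rewrite mulr_ge0 // mulr_ge0 // ltW.
  move=> h0 h1.
  have -> : w * (ln w - ln x) - w * (ln w - (ln x + ln (1 + e))) = w * ln (1 + e) by ring.
  set P := c * (w * ln (1 + e)) in h1 *.
  set Q := th * (a * x) in h0.
  set Z := th * (a * w) in h1.
  have -> : 2 / 3 * th * (a * w - 3 / 2 * (a * x)) = 2/3 * Z - Q.
    by rewrite /Z /Q; field.
  move: h1; rewrite -mulrA -/Z => h1; lra.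
- have h0 : 0 <= c * (phi w m x - phi w m (x * (1 + e))).
    by apply: mulr_ge0; [exact: ltW | rewrite subr_ge0; exact: phi_mono].
  apply: le_trans h0; apply: mulr_ge0_le0; first by apply: mulr_ge0 => //; lra.
  rewrite subr_le0.
  have : a * w <= a * (x * (1 + e)) by apply: ler_wpM2l => //; exact: ltW.
  have : a * (x * (1 + e)) <= a * (x * (3/2)) by apply: ler_wpM2l => //; apply: ler_wpM2l; [lra|lra].
  move=> h1 h2; rewrite (_ : a * (x * (3/2)) = 3/2 * (a * x)) in h1; last by ring.
  lra.
Qed.

Definition Pot {R : realType} {n} (c W M x : 'I_n -> R) : R :=
  \sum_(j < n) c j * phi (W j) (M j) (x j).
Definition Phi {R : realType} {n} (c : 'I_n -> R) (K : nat) (WW MM : nat -> 'I_n -> R)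
  (x : 'I_n -> R) : R := \sum_(l < K) Pot c (WW l) (MM l) x.

Definition goodWM {R : realType} {n} (W M : 'I_n -> R) :=
  (forall j, 0 <= W j) /\ (forall j, 0 < M j).

Lemma Pot_mono {R : realType} {n} (c W M x x' : 'I_n -> R) :
  (forall j, 0 < c j) -> goodWM W M -> vle x x' -> Pot c W M x' <= Pot c W M x.
Proof.
move=> hc [hW hM] hx; apply: ler_sum => j _; apply: ler_wpM2l; first exact: ltW.
exact: phi_mono.
Qed.

Lemma Pot_ge0 {R : realType} {n} (c W M x : 'I_n -> R) :
  (forall j, 0 < c j) -> goodWM W M -> 0 <= Pot c W M x.
Proof.
move=> hc [hW hM]; apply: sumr_ge0 => j _; apply: mulr_ge0; [exact: ltW | exact: phi_ge0].
Qed.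

Lemma Phi_mono {R : realType} {n} (c : 'I_n -> R) K WW MM x x' :
  (forall j, 0 < c j) -> (forall l, goodWM (WW l) (MM l)) -> vle x x' ->
  Phi c K WW MM x' <= Phi c K WW MM x.
Proof. move=> hc hg hx; apply: ler_sum => l _; exact: Pot_mono. Qed.

Lemma Phi_ge0 {R : realType} {n} (c : 'I_n -> R) K WW MM x :
  (forall j, 0 < c j) -> (forall l, goodWM (WW l) (MM l)) -> 0 <= Phi c K WW MM x.
Proof. move=> hc hg; apply: sumr_ge0 => l _; exact: Pot_ge0. Qed.

Lemma Pot_step {R : realType} {n} (c a W M x : 'I_n -> R) :
  (forall j, 0 < c j) -> nonneg a -> goodWM W M -> vle M x ->
  4 <= dotv a W -> dotv a x < 2 ->
  dotv c (step c a x) - dotv c x <= 3 * (Pot c W M x - Pot c W M (step c a x)).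
Proof.
move=> hc ha [hW hM] hMx hA hS.
have hc' := step_cost a x hc.
rewrite hc' addrC addKr.
set th := (2 * rsum c a)^-1.
have hth : 0 <= th.
  rewrite /th invr_ge0 mulr_ge0 //; apply: sumr_ge0 => i _; apply: divr_ge0 => //; exact: ltW.
have key : (2/3) * th * (dotv a W - 3/2 * dotv a x) <= Pot c W M x - Pot c W M (step c a x).
  have -> : (2/3) * th * (dotv a W - 3/2 * dotv a x) =
            \sum_(j < n) (2/3) * th * (a j * W j - 3/2 * (a j * x j)).
    rewrite /dotv -mulr_sumr; congr (_ * _).
    rewrite sumrB -mulr_sumr //.
  rewrite /Pot -sumrB; apply: ler_sum => j _.
  rewrite -mulrBr; apply: phi_step; [exact: hc|exact: ha|exact: hW|exact: hM|exact: hMx|exact: hth| |exact: eps_ge0|exact: eps_le].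
  - rewrite /eps -/th mulrA mulrCA; have := hc j; rewrite lt0r => /andP[cn0 _].
    by rewrite mulfV // mulr1 mulrC.
have h1 : th * dotv a x <= 2 * (th * (dotv a W - 3/2 * dotv a x)).
  rewrite mulrCA; apply: ler_wpM2l => //; lra.
lra.
Qed.

Lemma Phi_step {R : realType} {n} (c a : 'I_n -> R) K WW MM k x :
  (forall j, 0 < c j) -> nonneg a -> (forall l, goodWM (WW l) (MM l)) ->
  (k < K)%N -> vle (MM k) x -> 4 <= dotv a (WW k) -> dotv a x < 2 ->
  dotv c (step c a x) - dotv c x <= 3 * (Phi c K WW MM x - Phi c K WW MM (step c a x)).
Proof.
move=> hc ha hg hk hMx hA hS.
apply: le_trans (Pot_step hc ha (hg k) hMx hA hS) _.
apply: ler_wpM2l => //.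
have -> : Phi c K WW MM x - Phi c K WW MM (step c a x) =
  \sum_(l < K) (Pot c (WW l) (MM l) x - Pot c (WW l) (MM l) (step c a x)).
  by rewrite /Phi sumrB.
rewrite (bigD1 (Ordinal hk)) //= lerDl.
apply: sumr_ge0 => l _; rewrite subr_ge0; apply: Pot_mono => //.
apply: step_ge => //.
move=> j; apply: le_trans (ltW ((hg k).2 j)) (hMx j).
Qed.

Lemma Phi_round {R : realType} {n} (c a : 'I_n -> R) K WW MM k y N :
  (forall j, 0 < c j) -> nonneg a -> (forall l, goodWM (WW l) (MM l)) ->
  (k < K)%N -> vle (MM k) y -> 4 <= dotv a (WW k) ->
  (forall i, (i < N)%N -> dotv a (iter i (step c a) y) < 2) ->
  dotv c (iter N (step c a) y) - dotv c y <=
  3 * (Phi c K WW MM y - Phi c K WW MM (iter N (step c a) y)).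
Proof.
move=> hc ha hg hk hMy hA hS.
have hy : nonneg y by move=> j; apply: le_trans (ltW ((hg k).2 j)) (hMy j).
elim: N hS => [|N IH] hS /=; first by rewrite !subrr mulr0.
have IH' := IH (fun i hi => hS i (ltnW hi)).
have hM' : vle (MM k) (iter N (step c a) y).
  move=> j; apply: le_trans (hMy j) (iter_ge N hc ha hy j).
have := Phi_step hc ha hg hk hM' hA (hS N (ltnSn N)).
lra.
Qed.

Local Open Scope classical_set_scope.

Definition rowi {R : realType} {n} (s : seq ('I_n -> R)) i := nth (fun=> 0) s i.

Lemma feas_take {R : realType} {n} (s : seq ('I_n -> R)) x t :
  feasible s x -> feasible (take t s) x.
Proof.
move=> [h0 h1]; split => // i; rewrite size_take_min => hi.
have hit : (i < t)%N by move: hi; rewrite leq_min => /andP[].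
rewrite nth_take //; apply: h1; move: hi; rewrite leq_min => /andP[] //.
Qed.

Lemma OPT_lb {R : realType} {n} (c : 'I_n -> R) P x :
  (forall j, 0 < c j) -> feasible P x -> OPT c P <= dotv c x.
Proof.
move=> hc hx; apply: ge_inf; last by exists x.
exists 0 => _ [y [hy _] <-]; apply: dotv_ge0 => // j; exact: ltW.
Qed.

Lemma OPT_glb {R : realType} {n} (c : 'I_n -> R) P L :
  (exists x, feasible P x) -> (forall x, feasible P x -> L <= dotv c x) -> L <= OPT c P.
Proof.
move=> [x hx] hL; apply: lb_le_inf; first by exists (dotv c x); exists x.
by move=> _ [y hy <-]; apply: hL.
Qed.

Lemma OPT_lt {R : realType} {n} (c : 'I_n -> R) P L :
  (exists x, feasible P x) -> OPT c P < L -> exists2 x, feasible P x & dotv c x < L.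
Proof.
move=> [x hx] hL; have [y [z hz <-] hy] := inf_lt (ex_intro _ (dotv c x) (ex_intro2 _ _ x hx erefl)) hL.
by exists z.
Qed.

Lemma OPT_mono {R : realType} {n} (c : 'I_n -> R) s t t' :
  (forall j, 0 < c j) -> (exists x, feasible s x) -> (t <= t')%N ->
  OPT c (take t s) <= OPT c (take t' s).
Proof.
move=> hc [x hx] htt; apply: OPT_glb; first by exists x; exact: feas_take.
move=> y hy; apply: OPT_lb => //.
by rewrite -(take_takel s htt); exact: feas_take.
Qed.

Lemma feas_exists {R : realType} {n} (c : 'I_n -> R) s :
  valid_instance c s -> exists x, feasible s x.
Proof.
move=> [hc hs].
set rs := fun i : nat => \sum_(j < n) rowi s i j.
have rsp : forall i, (i < size s)%N -> 0 < rs i.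
  move=> i hi; have [h0 [j hj]] := hs i hi.
  rewrite /rs (bigD1 j) //=; apply: lt_le_trans hj _; rewrite lerDl.
  by apply: sumr_ge0 => k _; exact: h0.
set lam := \sum_(i < size s) (rs i)^-1.
exists (fun _ => lam); split.
  by move=> j; apply: sumr_ge0 => i _; rewrite invr_ge0 ltW // rsp.
move=> i hi.
have hl : (rs i)^-1 <= lam.
  rewrite /lam (bigD1 (Ordinal hi)) //= lerDl; apply: sumr_ge0 => k _.
  by rewrite invr_ge0 ltW // rsp.
have -> : dotv (nth (fun=> 0) s i) (fun=> lam) = lam * rs i.
  by rewrite /dotv /rs mulr_sumr; apply: eq_bigr => j _; rewrite mulrC.
have := rsp i hi => hp.
rewrite -(mulVf (lt0r_neq0 hp)); apply: ler_wpM2r; [exact: ltW | exact: hl].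
Qed.

Lemma alpha1_props {R : realType} {n} (c a : 'I_n -> R) j0 :
  (forall j, 0 < c j) -> nonneg a -> 0 < a j0 ->
  0 < alpha1 c a /\ forall j, alpha1 c a * a j <= c j.
Proof.
move=> hc ha haj0.
have rp : 0 < rsum c a.
  by apply: lt_le_trans (rsum_ge j0 hc ha); apply: divr_gt0.
have hlow : (rsum c a)^-1 <= alpha1 c a.
  apply: lb_le_inf; first by exists (c j0 / a j0); exists j0.
  move=> _ [j hj <-].
  have hj' : 0 < a j / c j by apply: divr_gt0.
  have := rsum_ge j hc ha => hr.
  rewrite -(invf_div (a j)) lef_pV2 ?posrE //.
split; first by apply: lt_le_trans hlow; rewrite invr_gt0.
move=> j; have [hj|hj] := ltP 0 (a j).
- have hle : alpha1 c a <= c j / a j.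
    apply: ge_inf; last by exists j.
    exists 0 => _ [i hi <-]; apply: divr_ge0; [exact: ltW | exact: ltW].
  by rewrite -ler_pdivlMr.
- have -> : a j = 0 by apply/eqP; rewrite eq_le hj ha.
  by rewrite mulr0 ltW.
Qed.

Local Close Scope classical_set_scope.

Lemma rows_nonneg {R : realType} {n} (c : 'I_n -> R) s i :
  valid_instance c s -> nonneg (rowi s i).
Proof.
move=> [_ hs] j; rewrite /row; case: (ltnP i (size s)) => hi.
  exact: (hs i hi).1.
by rewrite /rowi nth_default.
Qed.

Lemma flr_ge {R : realType} {n} (c : 'I_n -> R) O x : vle x (flr c O x).
Proof. by move=> j; rewrite /flr le_max lexx. Qed.

Lemma upd_ge {R : realType} {n} (c : 'I_n -> R) P a x :
  (forall j, 0 < c j) -> nonneg a -> nonneg x -> vle x (upd c P a x).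
Proof.
move=> hc ha hx j; rewrite /upd; case: ifP => _ //=.
apply: le_trans (flr_ge c (OPT c P) x j) _; apply: iter_ge => // i.
exact: le_trans (hx i) (flr_ge _ _ _ i).
Qed.

Lemma X_step {R : realType} {n} (c : 'I_n -> R) s t :
  valid_instance c s -> nonneg (X c s t) /\ vle (X c s t) (X c s t.+1).
Proof.
move=> hv; have hc := hv.1.
elim: t => [|t [IH1 IH2]].
  split; first by move=> j.
  apply: upd_ge => //; first exact: (rows_nonneg 0 hv).
have h1 : nonneg (X c s t.+1) by move=> j; exact: le_trans (IH1 j) (IH2 j).
split => //; apply: upd_ge => //; exact: (rows_nonneg t.+1 hv).
Qed.

Lemma X_nonneg {R : realType} {n} (c : 'I_n -> R) s t :
  valid_instance c s -> nonneg (X c s t).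
Proof. by move=> hv; case: (X_step t hv). Qed.

Lemma X_mono {R : realType} {n} (c : 'I_n -> R) s t t' :
  valid_instance c s -> (t <= t')%N -> vle (X c s t) (X c s t').
Proof.
move=> hv; elim: t' => [|t' IH]; first by rewrite leqn0 => /eqP -> j.
rewrite leq_eqVlt => /orP[/eqP -> //|]; rewrite ltnS => ht j.
apply: le_trans (IH ht j) _; exact: (X_step t' hv).2.
Qed.

Lemma alpha1_le_O {R : realType} {n} (c : 'I_n -> R) s t :
  valid_instance c s -> (0 < size s)%N -> (0 < t)%N ->
  alpha1 c (head (fun=> 0) s) <= OPT c (take t s).
Proof.
move=> hv hs0 ht.
have [j0 hj0] := (hv.2 0%N hs0).2.
have ha := rows_nonneg 0 hv.
rewrite -nth0.
have [ap hal] := alpha1_props hv.1 ha hj0.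
apply: OPT_glb.
  have [x hx] := feas_exists hv; exists x; exact: feas_take.
move=> x [hx0 hx1].
have h1 : 1 <= dotv (nth (fun=> 0) s 0) x.
  have := hx1 0%N; rewrite nth_take //; apply.
  by rewrite size_take_min leq_min ht hs0.
apply: le_trans (_ : alpha1 c (nth (fun=> 0) s 0) * dotv (nth (fun=> 0) s 0) x <= _).
  by rewrite -{1}[alpha1 _ _]mulr1; apply: ler_wpM2l; [exact: ltW|].
rewrite /dotv mulr_sumr; apply: ler_sum => j _; rewrite mulrA.
by apply: ler_wpM2r; [exact: hx0 | exact: hal].
Qed.

Lemma X_S {R : realType} {n} (c : 'I_n -> R) s t :
  X c s t.+1 = upd c (take t.+1 s) (rowi s t) (X c s t).
Proof. by []. Qed.

Lemma round_sat {R : realType} {n} (c : 'I_n -> R) s t :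
  1 <= dotv (rowi s t) (X c s t) -> X c s t.+1 = X c s t.
Proof. by move=> h; rewrite X_S /upd h. Qed.

Lemma O_pos {R : realType} {n} (c : 'I_n -> R) s t :
  valid_instance c s -> (0 < size s)%N -> (0 < t)%N -> 0 < OPT c (take t s).
Proof.
move=> hv hs ht; apply: lt_le_trans (alpha1_le_O hv hs ht).
have [j0 hj0] := (hv.2 0%N hs).2.
rewrite -nth0; by have [] := alpha1_props hv.1 (rows_nonneg 0 hv) hj0.
Qed.

Lemma round_viol {R : realType} {n} (c : 'I_n -> R) s t :
  valid_instance c s -> (t < size s)%N -> ~~ (1 <= dotv (rowi s t) (X c s t)) ->
  let O := OPT c (take t.+1 s) in
  let y := flr c O (X c s t) in
  let N := nsteps c (rowi s t) y in
  [/\ X c s t.+1 = iter N (step c (rowi s t)) y,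
      2 <= dotv (rowi s t) (X c s t.+1),
      (forall i, (i < N)%N -> dotv (rowi s t) (iter i (step c (rowi s t)) y) < 2),
      0 < O & forall j, O / (n%:R * c j) <= y j].
Proof.
move=> hv ht hviol O y N.
have hO : 0 < O by apply: O_pos => //; exact: leq_ltn_trans ht.
have [j0 hj0] := (hv.2 t ht).2.
have hn : 0 < n%:R :> R by rewrite ltr0n; exact: leq_ltn_trans (ltn_ord j0).
have hfl : forall j, O / (n%:R * c j) <= y j by move=> j; rewrite /y /flr le_max lexx orbT.
have hyp : forall j, 0 < y j.
  move=> j; apply: lt_le_trans (hfl j); apply: divr_gt0 => //; apply: mulr_gt0 => //; exact: hv.1.
have hX : X c s t.+1 = iter N (step c (rowi s t)) y by rewrite X_S /upd (negbTE hviol).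
have [h1 h2] := nsteps_spec hv.1 (rows_nonneg t hv) (fun j => ltW (hyp j)) hj0 (hyp j0).
by split => //; rewrite hX.
Qed.

Lemma X_feas_row {R : realType} {n} (c : 'I_n -> R) s t :
  valid_instance c s -> (t < size s)%N -> 1 <= dotv (rowi s t) (X c s t.+1).
Proof.
move=> hv ht; case: (boolP (1 <= dotv (rowi s t) (X c s t))) => h.
  by rewrite round_sat.
by have [_ h2 _ _ _] := round_viol hv ht h; apply: le_trans h2; lra.
Qed.

Lemma X_feas {R : realType} {n} (c : 'I_n -> R) s t :
  valid_instance c s -> (t <= size s)%N -> feasible (take t s) (X c s t).
Proof.
move=> hv ht; split; first exact: X_nonneg.
move=> i; rewrite size_takel // => hi.
rewrite nth_take //; apply: le_trans (X_feas_row hv (leq_trans hi ht)) _.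
apply: dotv_mono; first exact: (rows_nonneg i hv).
exact: X_mono.
Qed.

Lemma phi_le {R : realType} (w m x B : R) :
  0 <= w -> 0 < m -> w <= B * m -> 1 <= B -> phi w m x <= w * ln B.
Proof.
move=> hw hm hwB hB; rewrite /phi.
have [->|wn0] := eqVneq w 0; first by rewrite !mul0r.
have wp : 0 < w by rewrite lt_neqAle eq_sym wn0.
apply: ler_wpM2l => //; rewrite ge_max ln_ge0 //=.
have hBp : 0 < B by lra.
have h1 : ln w <= ln (B * m) by apply: ln_mono.
rewrite lnM ?posrE // in h1.
have h2 : ln m <= ln (Num.max x m) by apply: ln_mono => //; rewrite le_max lexx orbT.
lra.
Qed.

Lemma Pot_le {R : realType} {n} (c W M x : 'I_n -> R) B :
  (forall j, 0 < c j) -> goodWM W M -> (forall j, W j <= B * M j) -> 1 <= B ->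
  Pot c W M x <= dotv c W * ln B.
Proof.
move=> hc [hW hM] hB1 hB; rewrite /Pot /dotv mulr_suml; apply: ler_sum => j _.
rewrite -mulrA; apply: ler_wpM2l; [exact: ltW | exact: phi_le].
Qed.

Lemma geom_sum {R : realType} K : \sum_(k < K) ((2:R) ^+ k)^-1 + 2 * ((2:R) ^+ K)^-1 = 2.
Proof.
elim: K => [|K IH]; first by rewrite big_ord0 expr0 invr1 add0r mulr1.
rewrite big_ord_recr /= -addrA.
have -> : ((2:R) ^+ K)^-1 + 2 * ((2:R) ^+ K.+1)^-1 = 2 * ((2:R) ^+ K)^-1.
  rewrite exprS invfM; field; by rewrite expf_neq0.
exact: IH.
Qed.

Lemma geom_le {R : realType} K : \sum_(k < K) ((2:R) ^+ k)^-1 <= 2.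
Proof.
have := geom_sum (R:=R) K => h.
have : 0 <= 2 * ((2:R) ^+ K)^-1 by rewrite mulr_ge0 // invr_ge0 exprn_ge0.
lra.
Qed.

Lemma level_exists {R : realType} (Os a O : R) K :
  0 < a -> a <= O -> O <= Os -> Os / 2 ^+ K < a ->
  exists k, [/\ (k < K)%N, Os / 2 ^+ k.+1 < O & O <= Os / 2 ^+ k].
Proof.
move=> ha haO hOs hK.
have hK0 : (0 < K)%N.
  case: K hK => [|K] //; rewrite expr0 divr1 => h; lra.
pose P := fun k => Os / 2 ^+ k.+1 < O.
have exP : exists k, P k by exists K.-1; rewrite /P prednK //; lra.
case: (ex_minnP exP) => k hk hmin.
exists k; split => //.
- rewrite ltnNge; apply/negP => hKk.
  have := hmin K.-1; rewrite /P prednK // => h.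
  have := h (lt_le_trans hK haO); rewrite leqNgt; move/negP; apply.
  by rewrite -ltnS prednK.
- case: k hk hmin => [|k] hk hmin; first by rewrite expr0 divr1.
  have := hmin k; rewrite ltnn => h.
  by rewrite leNgt; apply/negP => hk'; have := h hk'.
Qed.

Lemma K_exists {R : realType} (Os a : R) : 0 < a -> exists K, Os / 2 ^+ K < a.
Proof.
move=> ha; exists (Num.Def.trunc (Os / a)).+1.
set K := (Num.Def.trunc (Os / a)).+1.
have h1 : Os / a < K%:R by apply: truncnS_gt.
have h2 : (K%:R : R) <= 2 ^+ K.
  by rewrite -natrX ler_nat; apply: ltnW; apply: ltn_expl.
have h2p : (0:R) < 2 ^+ K by rewrite exprn_gt0.
rewrite ltr_pdivrMr // mulrC -ltr_pdivrMr //.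
exact: lt_le_trans h1 h2.
Qed.

Lemma dotv_scale {R : realType} {n} (a z : 'I_n -> R) (r : R) :
  dotv a (fun j => r * z j) = r * dotv a z.
Proof. by rewrite /dotv mulr_sumr; apply: eq_bigr => j _; rewrite mulrCA. Qed.

Lemma comparator {R : realType} {n} (c : 'I_n -> R) s L :
  valid_instance c s -> 0 < L ->
  exists W : 'I_n -> R, [/\ nonneg W, dotv c W <= 8 * L &
    forall t, (t < size s)%N -> OPT c (take t.+1 s) <= L -> 4 <= dotv (rowi s t) W].
Proof.
move=> hv hL.
case: (pselect (exists t, (t < size s)%N /\ OPT c (take t.+1 s) <= L)) => [[t0 [ht0 hL0]]|hno].
- pose P := fun t => (t <= size s)%N && (OPT c (take t s) <= L).
  have exP : exists t, P t by exists t0.+1; rewrite /P ht0 hL0.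
  have ub : forall t, P t -> (t <= size s)%N by move=> t /andP[].
  case: (ex_maxnP exP ub) => T hT hmax.
  move/andP: hT => [hTm hTL].
  have hne : exists x, feasible (take T s) x.
    by have [x hx] := feas_exists hv; exists x; exact: feas_take.
  have hlt : OPT c (take T s) < 2 * L by lra.
  have [z hz hzc] := OPT_lt hne hlt.
  exists (fun j => 4 * z j); split.
  + by move=> j; rewrite mulr_ge0 //; exact: hz.1.
  + by rewrite dotv_scale; lra.
  + move=> t ht htL.
    have hT' : (t.+1 <= T)%N by apply: hmax; rewrite /P ht htL.
    have := hz.2 t; rewrite size_takel // nth_take // => h.
    by rewrite dotv_scale; have := h hT'; rewrite /rowi; lra.
- exists (fun _ => 0); split.
  + by move=> j.
  + rewrite /dotv big1; last by move=> j _; rewrite mulr0.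
    lra.
  + by move=> t ht htL; exfalso; apply: hno; exists t.
Qed.

Lemma flr_cost {R : realType} {n} (c : 'I_n -> R) O x ph :
  (forall j, 0 < c j) -> 0 < n%:R :> R -> (forall j, ph / (n%:R * c j) <= x j) ->
  dotv c (flr c O x) - dotv c x <= Num.max ph O - ph.
Proof.
move=> hc hn hx.
have hd : Num.max ph O - ph = \sum_(j < n) (Num.max ph O - ph) / n%:R.
  rewrite sumr_const card_ord -mulr_natr; field; exact: lt0r_neq0.
rewrite hd /dotv -sumrB; apply: ler_sum => j _.
have cj := hc j; have cn0 : c j != 0 by exact: lt0r_neq0.
have nn0 : n%:R != 0 :> R by exact: lt0r_neq0.
have hmp : 0 <= Num.max ph O - ph by rewrite subr_ge0 le_max lexx.
rewrite /flr -mulrBr.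
have [hle|hlt] := leP (O / (n%:R * c j)) (x j).
  by rewrite subrr mulr0 divr_ge0 // ltW.
- have h1 : c j * (O / (n%:R * c j)) = O / n%:R by field; rewrite cn0 nn0.
  have h2 : ph / n%:R <= c j * x j.
    have := hx j => h; rewrite -ler_pdivrMl // (_ : (c j)^-1 * (ph / n%:R) = ph / (n%:R * c j)) //.
    by field; rewrite cn0 nn0.
  have h3 : O / n%:R <= Num.max ph O / n%:R by apply: ler_wpM2r; [rewrite invr_ge0 ltW | rewrite le_max lexx orbT].
  rewrite mulrBr h1 mulrBl; lra.
Qed.

Lemma flr_floor {R : realType} {n} (c : 'I_n -> R) O x z ph :
  (forall j, 0 < c j) -> 0 < n%:R :> R -> (forall j, ph / (n%:R * c j) <= x j) ->
  vle x z -> vle (flr c O x) z -> forall j, Num.max ph O / (n%:R * c j) <= z j.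
Proof.
move=> hc hn hx hxz hfz j.
have [h|h] := leP ph O.
- apply: le_trans (hfz j); rewrite /flr le_max lexx orbT //.
- exact: le_trans (hx j) (hxz j).
Qed.

Lemma basics {R : realType} {n} (c : 'I_n -> R) s :
  valid_instance c s -> (0 < size s)%N ->
  [/\ 0 < n%:R :> R, 0 < alpha1 c (head (fun=> 0) s), 0 < OPT c s,
      (forall t, (t <= size s)%N -> OPT c (take t s) <= OPT c s) &
      (forall t, (0 < t)%N -> alpha1 c (head (fun=> 0) s) <= OPT c (take t s))].
Proof.
move=> hv hs.
have [j0 hj0] := (hv.2 0%N hs).2.
split.
- by rewrite ltr0n; exact: leq_ltn_trans (ltn_ord j0).
- rewrite -nth0; by have [] := alpha1_props hv.1 (rows_nonneg 0 hv) hj0.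
- by rewrite -{1}(take_size s); apply: O_pos.
- move=> t ht; rewrite -{2}(take_size s); apply: OPT_mono; [exact: hv.1 | exact: (feas_exists hv) | exact: ht].
- by move=> t ht; apply: alpha1_le_O.
Qed.

Lemma cost_bound {R : realType} {n} (c : 'I_n -> R) s :
  valid_instance c s -> (0 < size s)%N ->
  dotv c (X c s (size s)) <= OPT c s * (1 + 48 * ln (16 * n%:R)).
Proof.
move=> hv hs.
have hc := hv.1.
have [hn alp Osp hOt hal] := basics hv hs.
set Os := OPT c s in Osp hOt *.
set al := alpha1 c _ in alp hal.
have [K hK] := K_exists Os alp.
pose L := fun k : nat => Os / 2 ^+ k.
have Lp : forall k, 0 < L k by move=> k; rewrite /L divr_gt0 // exprn_gt0.
have hex : forall k : nat, exists W : 'I_n -> R, [/\ nonneg W, dotv c W <= 8 * L k &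
    forall t, (t < size s)%N -> OPT c (take t.+1 s) <= L k -> 4 <= dotv (rowi s t) W].
  by move=> k; apply: comparator.
have [WW hWW] := choice hex.
have hW1 : forall l, nonneg (WW l) by move=> l; case: (hWW l).
have hW2 : forall l, dotv c (WW l) <= 8 * L l by move=> l; case: (hWW l).
have hW3 : forall l t, (t < size s)%N -> OPT c (take t.+1 s) <= L l -> 4 <= dotv (rowi s t) (WW l).
  by move=> l; case: (hWW l).
pose MM := fun (k : nat) (j : 'I_n) => L k.+1 / (n%:R * c j).
have hg : forall l, goodWM (WW l) (MM l).
  move=> l; split; first exact: (hW1 l).
  by move=> j; rewrite /MM divr_gt0 ?mulr_gt0.
have h16 : 1 <= 16 * n%:R :> R.
  have : 1 <= n%:R :> R by rewrite ler1n -(ltr0n R).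
  lra.
have hl16 : 0 <= ln (16 * n%:R : R) by apply: ln_ge0.
have PhiB : forall x, Phi c K WW MM x <= 16 * Os * ln (16 * n%:R).
  move=> x; rewrite /Phi.
  apply: le_trans (_ : \sum_(l < K) 8 * L l * ln (16 * n%:R) <= _).
    apply: ler_sum => l _; apply: le_trans (Pot_le x hc (hg l) _ h16) _.
      move=> j; have hcj := hc j.
      have h1 : c j * WW l j <= 8 * L l.
        apply: le_trans (hW2 l); apply: dotv_term; [move=> i; exact: ltW | exact: (hW1 l)].
      rewrite /MM /L; rewrite -(ler_pM2l hcj).
      apply: le_trans h1 _; rewrite exprS.
      have : (2:R) ^+ l != 0 by rewrite expf_neq0.
      have : n%:R != 0 :> R by exact: lt0r_neq0.
      have : c j != 0 by exact: lt0r_neq0.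
      move=> h1 h2 h3; rewrite le_eqVlt; apply/orP; left; apply/eqP; rewrite /L; field.
      by rewrite ?h1 ?h2 ?h3 ?mulf_neq0 //.
    by apply: ler_wpM2r => //; exact: (hW2 l).
  rewrite -mulr_suml -mulr_sumr /L.
  have -> : \sum_(i < K) Os / 2 ^+ i = Os * \sum_(i < K) (2 ^+ i)^-1 by rewrite mulr_sumr.
  have hg2 := geom_le (R:=R) K.
  apply: ler_wpM2r => //.
  rewrite mulrA (_ : 16 * Os = 8 * Os * 2); last by ring.
  apply: ler_wpM2l => //; lra.
have inv : forall t, (t <= size s)%N -> exists ph, [/\ 0 <= ph, ph <= Os,
    (forall j, ph / (n%:R * c j) <= X c s t j) &
    dotv c (X c s t) <= ph + 3 * (Phi c K WW MM (X c s 0) - Phi c K WW MM (X c s t))].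
  elim=> [_|t IH ht].
    exists 0; split => //; first exact: ltW.
      by move=> j; rewrite mul0r.
    by rewrite subrr mulr0 addr0 /dotv big1 // => j _; rewrite mulr0.
  have [ph [hp0 hp1 hp2 hp3]] := IH (ltnW ht).
  case: (boolP (1 <= dotv (rowi s t) (X c s t))) => hsat.
    by exists ph; rewrite round_sat.
  have [hX h2 hlt hO hfl] := round_viol hv ht hsat.
  set O := OPT c (take t.+1 s) in hX h2 hlt hO hfl.
  set y := flr c O (X c s t) in hX h2 hlt hfl.
  exists (Num.max ph O); split.
  - by rewrite le_max hp0.
  - by rewrite ge_max hp1 /=; apply: hOt.
  - apply: flr_floor => //.
      exact: X_mono.
    rewrite hX; apply: iter_ge => //; first exact: (rows_nonneg t hv).
    by move=> j; apply: le_trans (X_nonneg t hv j) (flr_ge _ _ _ j).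
  - have [k [hk hlo hhi]] := level_exists alp (hal t.+1 (ltn0Sn t)) (hOt t.+1 ht) hK.
    have hA : 4 <= dotv (rowi s t) (WW k) by apply: (hW3 k).
    have hMy : vle (MM k) y.
      move=> j; apply: le_trans (hfl j); rewrite /MM.
      apply: ler_wpM2r; [rewrite invr_ge0 mulr_ge0 // ltW // | exact: ltW].
    have hr := Phi_round hc (rows_nonneg t hv) hg hk hMy hA hlt.
    rewrite -hX in hr.
    have hfc := flr_cost O hc hn hp2.
    have hmono : Phi c K WW MM y <= Phi c K WW MM (X c s t).
      by apply: Phi_mono => //; exact: flr_ge.
    rewrite -/y in hfc.
    lra.
have [ph [hp0 hp1 hp2 hp3]] := inv (size s) (leqnn _).
have := @Phi_ge0 R n c K WW MM (X c s (size s)) hc hg.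
have := PhiB (X c s 0).
lra.
Qed.

Definition Psi {R : realType} {n} (x : 'I_n -> R) : R := \sum_(j < n) ln (x j).

Lemma Psi_mono {R : realType} {n} (x x' : 'I_n -> R) :
  (forall j, 0 < x j) -> vle x x' -> Psi x <= Psi x'.
Proof. by move=> hx hxx; apply: ler_sum => j _; apply: ln_mono. Qed.

Lemma Psi_double {R : realType} {n} (x x' : 'I_n -> R) j :
  (forall j, 0 < x j) -> vle x x' -> 2 * x j <= x' j -> Psi x + ln 2 <= Psi x'.
Proof.
move=> hx hxx h2; rewrite /Psi (bigD1 j) //= (bigD1 j (P := xpredT)) //=.
have h1 : \sum_(i < n | i != j) ln (x i) <= \sum_(i < n | i != j) ln (x' i).
  by apply: ler_sum => i _; apply: ln_mono.
have h3 : ln (2 * x j) <= ln (x' j) by apply: ln_mono => //; rewrite mulr_gt0.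
rewrite lnM ?posrE // in h3; lra.
Qed.

Lemma exists_double {R : realType} {n} (a x x' : 'I_n -> R) :
  nonneg a -> nonneg x -> dotv a x < 1 -> 2 <= dotv a x' -> exists j, 2 * x j <= x' j.
Proof.
move=> ha hx h1 h2.
case: (pselect (exists j, 2 * x j <= x' j)) => // hno; exfalso.
have hall : vle x' (fun j => 2 * x j).
  move=> j; have [h|h] := leP (2 * x j) (x' j); last exact: ltW.
  by exfalso; apply: hno; exists j.
have := dotv_mono ha hall; rewrite dotv_scale; lra.
Qed.

Lemma num_updatesE {R : realType} {n} (c : 'I_n -> R) s :
  num_updates (@alg R) c s =
  (\sum_(i < size s) nat_of_bool (~~ (1 <= dotv (rowi s i) (X c s i))%R))%N.
Proof.
rewrite /num_updates -sum1_card big_mkcond /=; apply: eq_bigr => i _.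
have ha := alg_take c (ltnW (ltn_ord i)).
case: (boolP (i \in _)) => h.
- have := set_mem h => /=; rewrite asboolb ha => hp.
  by rewrite -ltNge /rowi hp.
- case: (boolP (dotv (nth (fun=> 0) s i) (X c s i) < 1)) => hp.
    exfalso; move/negP: h; apply; apply: mem_set => /=.
    by rewrite asboolb ha.
  by rewrite -ltNge /rowi (negbTE hp).
Qed.

Lemma ln2_ge {R : realType} : 2^-1 <= ln (2 : R).
Proof.
have := ln1D_ge (ler01 : (0:R) <= 1).
by rewrite (_ : (1 + 1 : R) = 2) //; move=> h; apply: le_trans h; rewrite mul1r.
Qed.

Lemma count_bound {R : realType} {n} (c : 'I_n -> R) s :
  valid_instance c s -> (0 < size s)%N ->
  (num_updates (@alg R) c s)%:R <=
  1 + 2 * n%:R * ln (n%:R * dotv c (X c s (size s)) / alpha1 c (head (fun=> 0) s)).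
Proof.
move=> hv hs.
have hc := hv.1.
have [hn alp Osp hOt hal] := basics hv hs.
set al := alpha1 c _ in alp hal *.
set m := size s in hs hOt *.
pose v := fun i => ~~ (1 <= dotv (rowi s i) (X c s i)).
have hv0 : v 0%N.
  rewrite /v /= /dotv big1; last by move=> j _; rewrite mulr0.
  by rewrite -ltNge ltr01.
have [hX1 _ _ hO1 hfl1] := round_viol hv hs hv0.
have hX1ge : forall j, al / (n%:R * c j) <= X c s 1 j.
  move=> j; apply: le_trans (_ : OPT c (take 1 s) / (n%:R * c j) <= _).
    apply: ler_wpM2r; [by rewrite invr_ge0 mulr_ge0 // ltW | exact: hal].
  apply: le_trans (hfl1 j) _; rewrite hX1; apply: iter_ge => //; first exact: (rows_nonneg 0 hv).
  by move=> i; apply: le_trans (X_nonneg 0 hv i) (flr_ge _ _ _ i).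
have hpos : forall t, (0 < t)%N -> forall j, 0 < X c s t j.
  move=> t ht j; apply: lt_le_trans (le_trans (hX1ge j) (X_mono hv ht j)).
  by rewrite divr_gt0 // mulr_gt0.
have IND : forall t, (0 < t)%N -> (t <= m)%N ->
    ln 2 * ((\sum_(i < t) nat_of_bool (v i))%:R - 1) <= Psi (X c s t) - Psi (X c s 1).
  elim=> [//|t IH] _ ht.
  case: t IH ht => [|t] IH ht.
    by rewrite big_ord1 hv0 subrr mulr0 subrr.
  have IH' := IH (ltn0Sn t) (ltnW ht).
  rewrite big_ord_recr natrD.
  case: (boolP (v t.+1)) => hvt.
  - have hlt : dotv (rowi s t.+1) (X c s t.+1) < 1 by rewrite ltNge.
    have [_ h2 _ _ _] := round_viol hv ht hvt.
    have [j hj] := exists_double (rows_nonneg t.+1 hv) (X_nonneg t.+1 hv) hlt h2.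
    have := Psi_double (hpos t.+1 (ltn0Sn t)) (X_mono hv (leqnSn t.+1)) hj.
    rewrite (_ : (true:nat)%:R = 1 :> R) //; lra.
  - rewrite (_ : (false:nat)%:R = 0 :> R) // addr0 round_sat //; by apply: negbNE.
have hU := IND m hs (leqnn m).
rewrite -/(X c s m) in hU *.
set cst := dotv c (X c s m).
have hcj : forall j, c j * X c s m j <= cst.
  by move=> j; apply: dotv_term; [move=> i; exact: ltW | exact: X_nonneg].
have cstp : 0 < cst.
  have [j0 _] := (hv.2 0%N hs).2.
  apply: lt_le_trans (hcj j0); rewrite mulr_gt0 //; exact: hpos.
set r := n%:R * cst / al.
have rp : 0 < r by rewrite /r divr_gt0 // mulr_gt0.
have hPsi : Psi (X c s m) - Psi (X c s 1) <= n%:R * ln r.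
  have : Psi (X c s m) <= \sum_(j < n) (ln r + ln (X c s 1 j)).
    apply: ler_sum => j _.
    have hx1 := hpos 1%N (ltn0Sn 0) j.
    rewrite -lnM ?posrE //; apply: ln_mono; first exact: hpos.
    have cj := hc j.
    apply: le_trans (_ : cst / c j <= _).
      by rewrite ler_pdivlMr // mulrC.
    apply: le_trans (_ : r * (al / (n%:R * c j)) <= _); last first.
      by apply: ler_wpM2l; [exact: ltW | exact: hX1ge].
    rewrite /r le_eqVlt; apply/orP; left; apply/eqP; field.
    by rewrite !lt0r_neq0.
  rewrite big_split /= sumr_const card_ord -/(Psi (X c s 1)) mulr_natl.
  lra.
have hU1 : (1 <= (\sum_(i < m) nat_of_bool (v i)))%N.
  by rewrite (bigD1 (Ordinal hs)) //= hv0.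
have hU1' : 1 <= (\sum_(i < m) nat_of_bool (v i))%:R :> R by rewrite ler1n.
have hl2 := ln2_ge (R:=R).
rewrite num_updatesE -/m.
set U := (\sum_(i < m) nat_of_bool (v i))%:R in hU hU1' *.
rewrite /U -/v.
nra.
Qed.

Lemma ln_le_id {R : realType} (x : R) : 0 < x -> ln x <= x - 1.
Proof.
move=> hx; have h : -1 < x - 1 by lra.
by have := le_ln1Dx h; rewrite addrC subrK.
Qed.

Lemma ln_le_abs {R : realType} (x : R) : ln x <= `|ln x|.
Proof. exact: ler_norm. Qed.

Unset Implicit Arguments.
Theorem theorem8 (R : realType) :
  exists (alg : online_alg R) (C : R) (k : nat), 0 < C /\
  forall (n : nat) (c : 'I_n -> R) (s : seq ('I_n -> R)),
    valid_instance c s -> (0 < size s)%N ->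
    let x := fun t : nat => alg n c (take t s) in
    let m := size s in
    (* nonnegativity *)
    (forall t j, (t <= m)%N -> 0 <= x t j) /\
    (* monotonicity: coordinates never decrease *)
    (forall t j, (t < m)%N -> x t j <= x t.+1 j) /\
    (* after round t, all arrived constraints are satisfied *)
    (forall t, (t <= m)%N -> feasible (take t s) (x t)) /\
    (* an update happens only on a violated constraint *)
    (forall t, (t < m)%N -> 1 <= dotv (nth (fun=> 0) s t) (x t) -> x t.+1 = x t) /\
    (* competitive ratio O(log n) *)
    dotv c (x m) <= C * (1 + ln (n%:R)) * OPT c s /\
    (* number of updates poly(n, log OPT, log (1/alpha_1)) *)
    (num_updates alg c s)%:R <=
      C * (n%:R + `|ln (OPT c s)| + `|ln (alpha1 c (head (fun=> 0) s))^-1| + 1) ^+ k.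
Proof.
exists (@alg R), 2000, 2%N; split; first lra.
move=> n c s hv hs x m.
have hxt : forall t, (t <= m)%N -> x t = X c s t by move=> t ht; exact: alg_take.
split.
  by move=> t j ht; rewrite hxt //; exact: X_nonneg.
split.
  by move=> t j ht; rewrite !hxt // ?(ltnW ht) //; exact: X_mono.
split.
  by move=> t ht; rewrite hxt //; exact: X_feas.
split.
  move=> t ht h; rewrite !hxt // ?(ltnW ht) //; apply: round_sat.
  by move: h; rewrite hxt // (ltnW ht).
have [hn alp Osp _ _] := basics hv hs.
have hcb := cost_bound hv hs.
have hcnt := count_bound hv hs.
rewrite hxt // /m.
set Os := OPT c s in Osp hcb hcnt *.
set al := alpha1 c _ in alp hcnt *.
set cst := dotv c (X c s (size s)) in hcb hcnt *.
have hn1 : 1 <= n%:R :> R by rewrite ler1n -(ltr0n R).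
have hlnn : 0 <= ln (n%:R : R) by apply: ln_ge0.
have hln16 : ln (16 * n%:R : R) <= 15 + ln n%:R.
  have h16p : (0:R) < 16 by lra.
  rewrite lnM ?posrE //.
  have := @ln_le_id R 16 h16p; lra.
have hcstOs : Os <= cst.
  rewrite /Os -{1}(take_size s); apply: OPT_lb; first exact: hv.1.
  by apply: X_feas.
split.
  apply: le_trans hcb _.
  rewrite mulrC; apply: ler_wpM2r; first exact: ltW.
  lra.
set B := 1 + 48 * ln (16 * n%:R : R) in hcb.
have hl16 : 0 <= ln (16 * n%:R : R) by apply: ln_ge0; lra.
have hB1 : 1 <= B by rewrite /B; lra.
have hBp : 0 < B by lra.
have cstp : 0 < cst by lra.
have hr : ln (n%:R * cst / al) <= ln (n%:R * (Os * (B * al^-1))).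
  apply: ln_mono; first by rewrite divr_gt0 // mulr_gt0.
  rewrite -mulrA; apply: ler_wpM2l; first lra.
  rewrite mulrA; apply: ler_wpM2r; first by rewrite invr_ge0 ltW.
  exact: hcb.
have P1 : (n%:R : R) \is Num.pos by rewrite posrE.
have P2 : Os \is Num.pos by rewrite posrE.
have P3 : B \is Num.pos by rewrite posrE.
have P4 : al^-1 \is Num.pos by rewrite posrE invr_gt0.
have P34 : B * al^-1 \is Num.pos by rewrite posrE mulr_gt0 // invr_gt0.
have P234 : Os * (B * al^-1) \is Num.pos by rewrite posrE !mulr_gt0 // invr_gt0.
rewrite (lnM P1 P234) (lnM P2 P34) (lnM P3 P4) in hr.
have h1 := @ln_le_id R n%:R hn.
have h2 := @ln_le_id R B hBp.
have h3 := ln_le_abs Os.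
have h4 := ln_le_abs (al^-1).
set A1 := `|ln Os| in h3 *.
set A2 := `|ln al^-1| in h4 *.
have hA1 : 0 <= A1 by apply: normr_ge0.
have hA2 : 0 <= A2 by apply: normr_ge0.
set Y := n%:R + A1 + A2 + 1.
have hY1 : 1 <= Y by rewrite /Y; lra.
have hlr : ln (n%:R * cst / al) <= 720 * Y.
  rewrite /Y; rewrite /B in h2; lra.
have hnY : n%:R <= Y by rewrite /Y; lra.
set U := (num_updates (alg (R:=R)) c s)%:R in hcnt *.
have : 2 * n%:R * ln (n%:R * cst / al) <= 1440 * Y ^+ 2.
  rewrite expr2.
  set l := ln (n%:R * cst / al) in hlr *.
  nra.
move=> hh.
nra.
Qed.
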